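(* For every $t\ge 0$, every $k\ge1$ and every collection $\Omega$ of functions, $$\rho_0\bigl(\mathsf{TL}_{k+1}^{(t+k)}(\Omega)\bigr)\subseteq\rho_0\bigl(\mathsf{gwl}_k^{(t)}\bigr)\subseteq\rho_0\bigl(\mathsf{TL}_{k+1}^{(t+1)}(\Omega)\bigr).$$
   Context: Fix integers $n\ge 1$ and $\ell\ge 1$. A graph is a triple $G=(V_G,E_G,\mathrm{col}_G)$ with $V_G=[n]=\{1,\dots,n\}$, $E_G$ a set of unordered pairs of distinct vertices (undirected, no loops), and a vertex labelling $\mathrm{col}_G:V_G\to\mathbb R^\ell$. Let $\mathcal G$ be the set of all such graphs. Tensor language $\mathsf{TL}(\Omega)$: let $\Omega$ be a collection of functions, each of the form $f:\mathbb R^p\to\mathbb R$ for some $p\ge1$ depending on $f$. Expressions are generated by $\varphi::=\mathbf 1_{x=y}\mid \mathbf 1_{x\neq y}\mid E(x,y)\mid P_s(x)\mid \varphi\cdot\varphi\mid \varphi+\varphi\mid a\cdot\varphi\mid f(\varphi_1,\dots,\varphi_p)\mid \sum_x\varphi$, with $x,y$ index variables, $s\in[\ell]$, $a\in\mathbb R$, $f\in\Omega$ of arity $p$. Free variables: $\mathrm{free}(\mathbf 1_{x\,\mathrm{op}\,y})=\mathrm{free}(E(x,y))=\{x,y\}$, $\mathrm{free}(P_s(x))=\{x\}$; union of the components' free variables for $\cdot$, $+$, $f(\dots)$; $\mathrm{free}(a\cdot\varphi)=\mathrm{free}(\varphi)$; $\mathrm{free}(\sum_x\varphi)=\mathrm{free}(\varphi)\setminus\{x\}$.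 Semantics: for a graph $G$ and a valuation $\nu$ mapping variables to $V_G$: $[\![E(x,y)]\!]^\nu_G=1$ if $\nu(x)\nu(y)\in E_G$ and $0$ otherwise; $[\![P_s(x)]\!]^\nu_G=\mathrm{col}_G(\nu(x))_s$; $[\![\mathbf 1_{x\,\mathrm{op}\,y}]\!]^\nu_G=1$ if $\nu(x)\,\mathrm{op}\,\nu(y)$ and $0$ otherwise; $\cdot$, $+$, scalar multiplication and $f$ act on values; $[\![\sum_x\varphi]\!]^\nu_G=\sum_{v\in V_G}[\![\varphi]\!]^{\nu[x\mapsto v]}_G$. Summation depth $\mathrm{sd}$: $0$ for atoms, maximum over the components for $\cdot$, $+$, $f(\dots)$, $\mathrm{sd}(a\cdot\varphi)=\mathrm{sd}(\varphi)$, $\mathrm{sd}(\sum_x\varphi)=\mathrm{sd}(\varphi)+1$. $\mathsf{TL}_k(\Omega)$ is the set of expressions in which only variables from $\{x_1,\dots,x_k\}$ occur (free or bound; variables may be re-bound), and $\mathsf{TL}_k^{(t)}(\Omega)$ its subset of summation depth at most $t$. For a set $\mathcal L$ of expressions, $\rho_0(\mathcal L)$ is the set of pairs of graphs $(G,H)$ with $[\![\varphi]\!]_G=[\![\varphi]\!]_H$ for all closed (no free variables) $\varphi\in\mathcal L$. $k$-dimensional Weisfeiler–Leman ($k\ge1$): for $\mathbf v\in V_G^k$, $\mathsf{atp}_k(G,\mathbf v)$ records, for all $1\le i<j\le k$, whether $v_i=v_j$ and whether $v_iv_j\in E_G$, together with $\mathrm{col}_G(v_i)$ for all $i$. $\mathsf{wl}_k^{(0)}(G,\mathbf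 v)=\mathsf{atp}_k(G,\mathbf v)$, $\mathsf{wl}_k^{(t+1)}(G,\mathbf v)=\bigl(\mathsf{wl}_k^{(t)}(G,\mathbf v),\{\!\{(\mathsf{atp}_{k+1}(G,(v_1,\dots,v_k,u)),\mathsf{wl}_k^{(t)}(G,\mathbf v[u/1]),\dots,\mathsf{wl}_k^{(t)}(G,\mathbf v[u/k])):u\in V_G\}\!\}\bigr)$, where $\mathbf v[u/i]$ replaces the $i$-th entry by $u$ and $\{\!\{\cdot\}\!\}$ denotes a multiset; labels are compared as formal objects across graphs. $\mathsf{gwl}_k^{(t)}(G)=\{\!\{\mathsf{wl}_k^{(t)}(G,\mathbf v):\mathbf v\in V_G^k\}\!\}$ and $\rho_0(\mathsf{gwl}_k^{(t)})=\{(G,H):\mathsf{gwl}_k^{(t)}(G)=\mathsf{gwl}_k^{(t)}(H)\}$. *)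

(* Defs.v *)
From Stdlib Require Import Reals.
From mathcomp Require Import all_boot perm.

Set Implicit Arguments.
Unset Strict Implicit.
Unset Printing Implicit Defensive.

Record graph (n l : nat) := Graph {
  edge : rel 'I_n;
  edge_sym : symmetric edge;
  edge_irr : irreflexive edge;
  col : 'I_n -> 'I_l -> R
}.

(* variable x_{i+1} of the paper is the number i.  A function symbol    *)
Inductive tl (l : nat) : Type :=
| TEq   : nat -> nat -> tl l
| TNeq  : nat -> nat -> tl l
| TEdge : nat -> nat -> tl l
| TLab  : 'I_l -> nat -> tl l
| TMul  : tl l -> tl l -> tl l
| TAdd  : tl l -> tl l -> tl l
| TScal : R -> tl l -> tl l
| TApp  : forall p : nat, (('I_p -> R) -> R) -> ('I_p -> tl l) -> tl l
| TSum  : nat -> tl l -> tl l.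

Arguments TEq {l}. Arguments TNeq {l}. Arguments TEdge {l}.

Definition fun_collection := {p : nat & ('I_p -> R) -> R} -> Prop.

Fixpoint is_free (l : nat) (x : nat) (e : tl l) : Prop :=
  match e with
  | TEq y z | TNeq y z | TEdge y z => x = y \/ x = z
  | TLab _ y => x = y
  | TMul a b | TAdd a b => is_free x a \/ is_free x b
  | TScal _ a => is_free x a
  | TApp p _ args => exists i : 'I_p, is_free x (args i)
  | TSum y a => x <> y /\ is_free x a
  end.

Definition closed (l : nat) (e : tl l) : Prop := forall x, ~ is_free x e.

Fixpoint vars_lt (l : nat) (k : nat) (e : tl l) : Prop :=
  match e with
  | TEq y z | TNeq y z | TEdge y z => (y < k)%N /\ (z < k)%N
  | TLab _ y => (y < k)%N
  | TMul a b | TAdd a b => vars_lt k a /\ vars_lt k b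
  | TScal _ a => vars_lt k a
  | TApp p _ args => forall i : 'I_p, vars_lt k (args i)
  | TSum y a => (y < k)%N /\ vars_lt k a
  end.

Fixpoint uses_only (l : nat) (Omega : fun_collection) (e : tl l) : Prop :=
  match e with
  | TEq _ _ | TNeq _ _ | TEdge _ _ | TLab _ _ => True
  | TMul a b | TAdd a b => uses_only Omega a /\ uses_only Omega b
  | TScal _ a => uses_only Omega a
  | TApp p f args => Omega (existT _ p f) /\ forall i : 'I_p, uses_only Omega (args i)
  | TSum _ a => uses_only Omega a
  end.

Fixpoint sd (l : nat) (e : tl l) : nat :=
  match e with
  | TEq _ _ | TNeq _ _ | TEdge _ _ | TLab _ _ => 0
  | TMul a b | TAdd a b => maxn (sd a) (sd b)
  | TScal _ a => sd a
  | TApp p _ args => \max_(i < p) sd (args i)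
  | TSum _ a => (sd a).+1
  end.

Definition TL (l k t : nat) (Omega : fun_collection) (e : tl l) : Prop :=
  vars_lt k e /\ (sd e <= t)%N /\ uses_only Omega e.

Definition upd (n : nat) (nu : nat -> 'I_n) (x : nat) (v : 'I_n) : nat -> 'I_n :=
  fun y => if y == x then v else nu y.

Fixpoint eval (n l : nat) (G : graph n l) (nu : nat -> 'I_n) (e : tl l) : R :=
  match e with
  | TEq x y => if nu x == nu y then R1 else R0
  | TNeq x y => if nu x != nu y then R1 else R0
  | TEdge x y => if edge G (nu x) (nu y) then R1 else R0
  | TLab s x => col G (nu x) s
  | TMul a b => Rmult (eval G nu a) (eval G nu b)
  | TAdd a b => Rplus (eval G nu a) (eval G nu b)
  | TScal c a => Rmult c (eval G nu a)
  | TApp p f args => f (fun i => eval G nu (args i))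
  | TSum x a => \big[Rplus/R0]_(v : 'I_n) eval G (upd nu x v) a
  end.

(* rho_0(L): pairs of graphs agreeing on all closed expressions of L.
   For closed expressions the value does not depend on the valuation
   (and valuations exist since n >= 1). *)
Definition rho0_TL (n l : nat) (L : tl l -> Prop) (G H : graph n l) : Prop :=
  forall e, L e -> closed e -> forall nu : nat -> 'I_n, eval G nu e = eval H nu e.

Definition atp (n l k : nat) (G : graph n l) (v : {ffun 'I_k -> 'I_n}) :
  {ffun 'I_k * 'I_k -> bool * bool} * {ffun 'I_k -> {ffun 'I_l -> R}} :=
  ([ffun ij : 'I_k * 'I_k =>
      if (ij.1 < ij.2)%N then (v ij.1 == v ij.2, edge G (v ij.1) (v ij.2))
      else (false, false)],
   [ffun i => [ffun s => col G (v i) s]]).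

Definition ext (n k : nat) (v : {ffun 'I_k -> 'I_n}) (u : 'I_n) : {ffun 'I_k.+1 -> 'I_n} :=
  [ffun i => match unlift ord_max i with Some j => v j | None => u end].

Definition subst (n k : nat) (v : {ffun 'I_k -> 'I_n}) (i : 'I_k) (u : 'I_n) : {ffun 'I_k -> 'I_n} :=
  [ffun j => if j == i then u else v j].

(* wl_eq t G H v w  <->  wl_k^{(t)}(G, v) = wl_k^{(t)}(H, w) (as formal labels).
   Equality of the multisets {{ ... : u in V_G }} and {{ ... : u in V_H }}
   is expressed by a bijection sigma : V_G -> V_H matching equal entries. *)
Fixpoint wl_eq (n l k t : nat) (G H : graph n l) (v w : {ffun 'I_k -> 'I_n}) : Prop :=
  match t with
  | 0 => atp G v = atp H w
  | t'.+1 =>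
      wl_eq t' G H v w /\
      exists sigma : {perm 'I_n}, forall u : 'I_n,
        atp G (ext v u) = atp H (ext w (sigma u)) /\
        forall i : 'I_k, wl_eq t' G H (subst v i u) (subst w i (sigma u))
  end.

Definition gwl_eq (n l k t : nat) (G H : graph n l) : Prop :=
  exists pi : {perm {ffun 'I_k -> 'I_n}}, forall v, wl_eq t G H v (pi v).

(* Main.v *)
Require Import Defs.
From Stdlib Require Import Reals ClassicalEpsilon FunctionalExtensionality Classical.
From HB Require Import structures.
From mathcomp Require Import all_boot perm.

Set Implicit Arguments.
Unset Strict Implicit.
Unset Printing Implicit Defensive.


Lemma Rplus_assoc' : associative Rplus. Proof. by move=> *; rewrite Rplus_assoc. Qed.
HB.instance Definition _ := Monoid.isComLaw.Build R R0 Rplus Rplus_assoc' Rplus_comm Rplus_0_l.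

Definition dec (P : Prop) : bool := if excluded_middle_informative P then true else false.
Lemma decRP (P : Prop) : reflect P (dec P).
Proof. rewrite /dec; case: excluded_middle_informative => h; constructor => //. Qed.

Section Basic.
Variables (n l : nat).
Implicit Types (G H : graph n l) (e : tl l).

Lemma free_lt m e x : vars_lt m e -> is_free x e -> (x < m)%N.
Proof.
elim: e x => /=.
- by move=> y z x [hy hz] [->|->].
- by move=> y z x [hy hz] [->|->].
- by move=> y z x [hy hz] [->|->].
- by move=> s y x hy ->.
- by move=> a IHa b IHb x [ha hb] [h|h]; [apply: IHa|apply: IHb].
- by move=> a IHa b IHb x [ha hb] [h|h]; [apply: IHa|apply: IHb].
- by move=> c a IHa x ha h; apply: IHa.
- by move=> p f args IH x ha [i hi]; apply: (IH i).
- by move=> y a IHa x [hy ha] [_ h]; apply: IHa.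
Qed.

Lemma eval_free_ext G e nu nu' : (forall x, is_free x e -> nu x = nu' x) ->
  eval G nu e = eval G nu' e.
Proof.
elim: e nu nu' => /=.
- by move=> y z nu nu' h; rewrite !h; auto.
- by move=> y z nu nu' h; rewrite !h; auto.
- by move=> y z nu nu' h; rewrite !h; auto.
- by move=> s y nu nu' h; rewrite h.
- by move=> a IHa b IHb nu nu' h; rewrite (IHa nu nu') ?(IHb nu nu') //; auto.
- by move=> a IHa b IHb nu nu' h; rewrite (IHa nu nu') ?(IHb nu nu') //; auto.
- by move=> c a IHa nu nu' h; rewrite (IHa nu nu').
- move=> p f args IH nu nu' h; f_equal; apply: functional_extensionality => i.
  by apply: IH => x hx; apply: h; exists i.
- move=> y a IHa nu nu' h; apply: eq_bigr => v _; apply: IHa => x hx.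
  rewrite /upd; case: eqP => // /eqP hxy; apply: h; split => //; exact/eqP.
Qed.

Fixpoint ren (tau : nat -> nat) e : tl l :=
  match e with
  | TEq x y => TEq (tau x) (tau y)
  | TNeq x y => TNeq (tau x) (tau y)
  | TEdge x y => TEdge (tau x) (tau y)
  | TLab s x => TLab s (tau x)
  | TMul a b => TMul (ren tau a) (ren tau b)
  | TAdd a b => TAdd (ren tau a) (ren tau b)
  | TScal c a => TScal c (ren tau a)
  | TApp p f args => TApp f (fun i => ren tau (args i))
  | TSum y a => TSum (tau y) (ren tau a)
  end.

Lemma eval_ren G tau e nu : injective tau ->
  eval G nu (ren tau e) = eval G (fun x => nu (tau x)) e.
Proof.
move=> itau; elim: e nu => //=.
- by move=> a IHa b IHb nu; rewrite IHa IHb.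
- by move=> a IHa b IHb nu; rewrite IHa IHb.
- by move=> c a IHa nu; rewrite IHa.
- by move=> p f args IH nu; f_equal; apply: functional_extensionality => i; rewrite IH.
- move=> y a IHa nu; apply: eq_bigr => v _; rewrite IHa; f_equal.
  apply: functional_extensionality => x; rewrite /upd (inj_eq itau) //.
Qed.

Lemma sd_ren tau e : sd (ren tau e) = sd e.
Proof.
elim: e => //=; try by move=> *; congr maxn.
- by move=> p f args IH; apply: eq_bigr => i _; rewrite IH.
- by move=> y a ->.
Qed.

Lemma vars_ren m tau e : (forall x, (x < m)%N -> (tau x < m)%N) -> vars_lt m e -> vars_lt m (ren tau e).
Proof.
move=> ht; elim: e => /=; try by move=> x y [*]; split; apply: ht.
- by move=> s x; apply: ht.
- by move=> a IHa b IHb [*]; split; auto.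
- by move=> a IHa b IHb [*]; split; auto.
- by move=> c a IHa; auto.
- by move=> p f args IH h i; auto.
- by move=> y a IHa [*]; split; auto.
Qed.

Lemma uses_ren (Om : fun_collection) tau e : uses_only Om e -> uses_only Om (ren tau e).
Proof.
elim: e => //=.
- by move=> a IHa b IHb [*]; split; auto.
- by move=> a IHa b IHb [*]; split; auto.
- by move=> p f args IH [h1 h2]; split => // i; auto.
Qed.

End Basic.


Section Atp.
Variables (n l : nat).
Implicit Types (G H : graph n l) (e : tl l).

Lemma atp_inv m G H (x y : {ffun 'I_m -> 'I_n}) : atp G x = atp H y ->
  (forall a b, (x a == x b) = (y a == y b) /\ edge G (x a) (x b) = edge H (y a) (y b)) /\
  (forall a s, col G (x a) s = col H (y a) s).
Proof.
rewrite /atp => [[e1 e2]]; split.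
- have key : forall a b : 'I_m, (a < b)%N ->
     (x a == x b) = (y a == y b) /\ edge G (x a) (x b) = edge H (y a) (y b).
    move=> a b hab; have := congr1 (fun F : {ffun 'I_m * 'I_m -> bool * bool} => F (a, b)) e1; rewrite !ffunE /= hab.
    by case.
  move=> a b; case: (ltngtP a b) => hab.
  + exact: key.
  + have [h1 h2] := key _ _ hab; split; first by rewrite eq_sym h1 eq_sym.
    by rewrite edge_sym h2 edge_sym.
  + have -> : a = b by apply: val_inj.
    by rewrite !eqxx !edge_irr.
- move=> a s; have := congr1 (fun F : {ffun 'I_m -> {ffun 'I_l -> R}} => F a s) e2; rewrite !ffunE //.
Qed.

Lemma atp_of m G H (x y : {ffun 'I_m -> 'I_n}) :
  (forall a b, (x a == x b) = (y a == y b) /\ edge G (x a) (x b) = edge H (y a) (y b)) ->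
  (forall a s, col G (x a) s = col H (y a) s) -> atp G x = atp H y.
Proof.
move=> h1 h2; rewrite /atp; congr pair; apply/ffunP.
- by case=> a b; rewrite !ffunE /=; case: ifP => // _; have [-> ->] := h1 a b.
- by move=> a; rewrite !ffunE; apply/ffunP => s; rewrite !ffunE.
Qed.

Lemma wl_atp k t G H (v w : {ffun 'I_k -> 'I_n}) : wl_eq t G H v w -> atp G v = atp H w.
Proof. by elim: t => //= t IH [h _]; apply: IH. Qed.

Definition ovr (nu : nat -> 'I_n) m (f : {ffun 'I_m -> 'I_n}) (x : nat) : 'I_n :=
  if (insub x : option 'I_m) is Some i then f i else nu x.

Lemma ovr_ord nu m (f : {ffun 'I_m -> 'I_n}) (i : 'I_m) : ovr nu f i = f i.
Proof. by rewrite /ovr valK. Qed.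

Lemma ovr_ge nu m (f : {ffun 'I_m -> 'I_n}) x : (m <= x)%N -> ovr nu f x = nu x.
Proof. by move=> h; rewrite /ovr insubF // ltnNge h. Qed.

Lemma ovr_lt nu m (f : {ffun 'I_m -> 'I_n}) x (hx : (x < m)%N) : ovr nu f x = f (Ordinal hx).
Proof. by rewrite -(ovr_ord nu f (Ordinal hx)). Qed.

Lemma ext_ovr k (v : {ffun 'I_k -> 'I_n}) u (i : 'I_k.+1) :
  ext v u i = ovr (fun _ => u) v i.
Proof.
rewrite /ext ffunE; case: unliftP => [j ->|->].
- by rewrite /= /bump leqNgt ltn_ord add0n (ovr_ord _ v j).
- by rewrite ovr_ge.
Qed.

Lemma ext_max k (v : {ffun 'I_k -> 'I_n}) u : ext v u ord_max = u.
Proof. by rewrite ext_ovr ovr_ge. Qed.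

Lemma ext_lift k (v : {ffun 'I_k -> 'I_n}) u j : ext v u (lift ord_max j) = v j.
Proof. by rewrite /ext ffunE liftK. Qed.

End Atp.


Section Dir2.
Variables (n l k : nat) (G H : graph n l) (i0 : 'I_k).

Lemma struct_eval m (x y : {ffun 'I_m -> 'I_n}) t (hatp : atp G x = atp H y)
  (hsum : forall z a (rho : nat -> 'I_m) nuG nuH, vars_lt k.+1 (TSum z a) ->
     (sd (TSum z a) <= t)%N ->
     (forall x', is_free x' (TSum z a) -> nuG x' = x (rho x') /\ nuH x' = y (rho x')) ->
     eval G nuG (TSum z a) = eval H nuH (TSum z a)) :
  forall e (rho : nat -> 'I_m) nuG nuH, vars_lt k.+1 e -> (sd e <= t)%N ->
  (forall x', is_free x' e -> nuG x' = x (rho x') /\ nuH x' = y (rho x')) ->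
  eval G nuG e = eval H nuH e.
Proof.
have [hA hC] := atp_inv hatp.
elim => /=.
- move=> a b rho nuG nuH _ _ hf.
  have [-> ->] := hf a (or_introl erefl); have [-> ->] := hf b (or_intror erefl).
  by have [-> _] := hA (rho a) (rho b).
- move=> a b rho nuG nuH _ _ hf.
  have [-> ->] := hf a (or_introl erefl); have [-> ->] := hf b (or_intror erefl).
  by have [-> _] := hA (rho a) (rho b).
- move=> a b rho nuG nuH _ _ hf.
  have [-> ->] := hf a (or_introl erefl); have [-> ->] := hf b (or_intror erefl).
  by have [_ ->] := hA (rho a) (rho b).
- move=> s a rho nuG nuH _ _ hf.
  by have [-> ->] := hf a erefl; rewrite hC.
- move=> a IHa b IHb rho nuG nuH [va vb]; rewrite geq_max => /andP [sa sb] hf.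
  rewrite (IHa rho nuG nuH) // ?(IHb rho nuG nuH) // => x' h; apply: hf => /=; auto.
- move=> a IHa b IHb rho nuG nuH [va vb]; rewrite geq_max => /andP [sa sb] hf.
  rewrite (IHa rho nuG nuH) // ?(IHb rho nuG nuH) // => x' h; apply: hf => /=; auto.
- move=> c a IHa rho nuG nuH va sa hf.
  by rewrite (IHa rho nuG nuH).
- move=> p f args IH rho nuG nuH va /bigmax_leqP sa hf.
  f_equal; apply: functional_extensionality => i.
  apply: (IH i rho); [exact: va| exact: sa|].
  by move=> x' h; apply: hf; exact: (ex_intro _ i h).
- move=> z a _ rho nuG nuH va sa hf; exact: (hsum z a rho nuG nuH va sa hf).
Qed.

Definition L2 t := forall v w : {ffun 'I_k -> 'I_n}, wl_eq t G H v w ->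
  forall e (rho : nat -> 'I_k) nuG nuH, vars_lt k.+1 e -> (sd e <= t)%N ->
  (forall x, is_free x e -> nuG x = v (rho x) /\ nuH x = w (rho x)) ->
  eval G nuG e = eval H nuH e.

Definition L3 t := forall (v w : {ffun 'I_k -> 'I_n}) u u', wl_eq t G H v w ->
  atp G (ext v u) = atp H (ext w u') ->
  (forall i, wl_eq t G H (subst v i u) (subst w i u')) ->
  forall e (rho : nat -> 'I_k.+1) nuG nuH, vars_lt k.+1 e -> (sd e <= t)%N ->
  (forall x, is_free x e -> nuG x = ext v u (rho x) /\ nuH x = ext w u' (rho x)) ->
  eval G nuG e = eval H nuH e.

Lemma L2_0 : L2 0.
Proof.
move=> v w hw; apply: struct_eval; first exact: wl_atp hw.
by move=> z a rho nuG nuH _ /=.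
Qed.

Lemma L2_S t : L3 t -> L2 t.+1.
Proof.
move=> h3 v w hw; have hatp := wl_atp hw; move: hw => /= [hw [sig hsig]].
apply: struct_eval => // z a rho nuG nuH [hz va] /= sa hf.
rewrite [in RHS](reindex_inj (@perm_inj _ sig)); apply: eq_bigr => c _.
have [h1 h2] := hsig c.
apply: (h3 v w c (sig c) hw h1 h2 a (fun x => if x == z then ord_max else lift ord_max (rho x))) => //.
move=> x hx; rewrite /upd; case: eqP => [_|/eqP hxz]; first by rewrite !ext_max.
rewrite !ext_lift; apply: hf; split => //; exact/eqP.
Qed.

Lemma L3_of t : L2 t -> L3 t.
Proof.
move=> h2 v w u u' hw hatp hsub.
apply: struct_eval => // z a rho nuG nuH [hz va] sa hf.
pose z' := Ordinal hz.
pose f := fun j : 'I_k => rho (lift z' j).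
have [p hp] : exists p : 'I_k.+1, forall j, f j != p.
  case: (boolP [exists p, [forall j, f j != p]]) => [/existsP [p /forallP hp]|]; first by exists p.
  rewrite negb_exists => /forallP hall; exfalso.
  have : (#|[set: 'I_k.+1]| <= #|[set f j | j in 'I_k]|)%N.
    apply: subset_leq_card; apply/subsetP => q _; have := hall q.
    rewrite negb_forall => /existsP [j]; rewrite negbK => /eqP <-; exact: imset_f.
  rewrite cardsT card_ord => h; have := leq_trans h (leq_imset_card _ _).
  by rewrite card_ord ltnn.
pose tv := if unlift ord_max p is Some j then subst v j u else v.
pose tw := if unlift ord_max p is Some j then subst w j u' else w.
have htw : wl_eq t G H tv tw by rewrite /tv /tw; case: (unlift ord_max p).
pose rho' := fun x => if unlift ord_max (rho x) is Some j then j else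
                        if unlift ord_max p is Some j then j else i0.
apply: (h2 tv tw htw (TSum z a) rho' nuG nuH (conj hz va) sa).
move=> x hx.
have hxk : (x < k.+1)%N by apply: (free_lt (m := k.+1) (e := TSum z a)) => //; split.
have hxz : x <> z by case: hx.
have hne : rho x != p.
  pose xo := Ordinal hxk.
  have : xo != z' by apply/eqP => /(congr1 val) /= /hxz.
  case: (unliftP z' xo) => [j hj _|hj]; last by rewrite hj eqxx.
  have -> : x = lift z' j by rewrite -hj.
  exact: hp.
have [e1 e2] := hf x hx; rewrite e1 e2 /rho' /tv /tw.
case: (unliftP ord_max (rho x)) hne => [j' -> hne|-> hne].
- rewrite !ext_lift; case: (unliftP ord_max p) hne => [j hpj hne|//].
  rewrite /subst !ffunE; case: eqP => // hjj; move: hne; rewrite hpj hjj eqxx //.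
- rewrite !ext_max; case: (unliftP ord_max p) hne => [j hpj hne|hpm]; last by rewrite hpm eqxx.
  by rewrite /subst !ffunE eqxx.
Qed.

Lemma L2_all t : L2 t.
Proof.
elim: t => [|t IH]; first exact: L2_0.
exact/L2_S/L3_of.
Qed.

Definition isdiag (v : {ffun 'I_k -> 'I_n}) := [forall j, v j == v i0].

Lemma sum_diag (F : 'I_n -> R) :
  \big[Rplus/R0]_(c : 'I_n) F c =
  \big[Rplus/R0]_(v : {ffun 'I_k -> 'I_n}) (if isdiag v then F (v i0) else R0).
Proof.
rewrite -big_mkcond /=.
rewrite (reindex (fun c : 'I_n => [ffun _ : 'I_k => c])) /=.
  apply: eq_big => c; first by apply/esym/forallP => j; rewrite !ffunE.
  by rewrite ffunE.
exists (fun v : {ffun 'I_k -> 'I_n} => v i0) => [c _|v]; first by rewrite ffunE.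
rewrite inE => /forallP hv; apply/ffunP => j; rewrite ffunE; exact/esym/eqP/hv.
Qed.

Lemma L4 t (pi : {perm {ffun 'I_k -> 'I_n}}) (hpi : forall v, wl_eq t G H v (pi v)) :
  forall e, vars_lt k.+1 e -> (sd e <= t.+1)%N -> Defs.closed e ->
  forall nuG nuH, eval G nuG e = eval H nuH e.
Proof.
elim => /=.
- by move=> a b _ _ hc; exfalso; apply: (hc a); left.
- by move=> a b _ _ hc; exfalso; apply: (hc a); left.
- by move=> a b _ _ hc; exfalso; apply: (hc a); left.
- by move=> s a _ _ hc; exfalso; apply: (hc a).
- move=> a IHa b IHb [va vb]; rewrite geq_max => /andP [sa sb] hc nuG nuH.
  have ca : Defs.closed a by move=> x hx; apply: (hc x); left.
  have cb : Defs.closed b by move=> x hx; apply: (hc x); right.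
  by rewrite (IHa va sa ca nuG nuH) (IHb vb sb cb nuG nuH).
- move=> a IHa b IHb [va vb]; rewrite geq_max => /andP [sa sb] hc nuG nuH.
  have ca : Defs.closed a by move=> x hx; apply: (hc x); left.
  have cb : Defs.closed b by move=> x hx; apply: (hc x); right.
  by rewrite (IHa va sa ca nuG nuH) (IHb vb sb cb nuG nuH).
- by move=> c a IHa va sa hc nuG nuH; rewrite (IHa va sa hc nuG nuH).
- move=> p f args IH va /bigmax_leqP sa hc nuG nuH.
  f_equal; apply: functional_extensionality => i; apply: IH; [exact: va|exact: sa|].
  by move=> x hx; apply: (hc x); exists i.
- move=> z a _ [hz va] sa hc nuG nuH.
  rewrite (sum_diag (fun c => eval G (upd nuG z c) a)).
  rewrite (sum_diag (fun c => eval H (upd nuH z c) a)).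
  rewrite [in RHS](reindex_inj (@perm_inj _ pi)); apply: eq_bigr => v _.
  have hatp := wl_atp (hpi v); have [hA _] := atp_inv hatp.
  have -> : isdiag (pi v) = isdiag v.
    by apply: eq_forallb => j; have [-> _] := hA j i0.
  case: ifP => // hd.
  apply: (L2_all (hpi v) (rho := fun _ => i0)) => //.
  move=> x hx; have -> : x = z.
    by case: (eqVneq x z) => // hxz; exfalso; apply: (hc x); split => //; exact/eqP.
  by rewrite /upd eqxx.
Qed.

End Dir2.


Lemma perm_of_keys (T : finType) (K : eqType) (f g : T -> K) :
  (forall x, count_mem x (map f (enum T)) = count_mem x (map g (enum T))) ->
  exists s : {perm T}, forall a, g (s a) = f a.
Proof.
move=> hc.
have hp : perm_eq (map f (enum T)) (map g (enum T)).
  have [s hs hps] := (count_subseqP _ _).1 (fun x => eq_leq (hc x)).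
  have e1 : size s = size (map g (enum T)) by rewrite -(perm_size hps) !size_map.
  have := (size_subseq_leqif hs).2; rewrite e1 eqxx => /esym /eqP E.
  by rewrite -E.
pose t := map_tuple g (enum_tuple T).
have := @tuple_permP _ _ (map f (enum T)) t hp => -[p hpe].
have inj : injective (fun a => enum_val (p (enum_rank a))).
  by move=> a b /enum_val_inj /perm_inj /enum_rank_inj.
exists (perm inj) => a; rewrite permE.
have := congr1 (fun s => nth (f a) s (enum_rank a)) hpe => /=.
rewrite (nth_map a) ?nth_enum_rank; last by rewrite -cardE ltn_ord.
move=> ->.
rewrite (nth_map (enum_rank a)) /=; last by rewrite size_enum_ord ltn_ord.
rewrite nth_ord_enum /t tnth_map; congr g.
rewrite (tnth_nth a) (enum_val_nth a) //.
Qed.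

Lemma count_enumT (T : finType) (P : pred T) : count P (enum T) = #|P|.
Proof. by rewrite enumT cardE /enum_mem size_filter. Qed.

Lemma count_FenumT (T : finType) (P : pred T) : count P (Finite.enum T) = #|P|.
Proof. by rewrite -enumT count_enumT. Qed.

Lemma sum_ind (T : finType) (P : pred T) :
  \big[Rplus/R0]_(a : T) (if P a then R1 else R0) = INR #|P|.
Proof.
rewrite -big_mkcond /= big_const.
elim: #|_| => //= m ->; rewrite Rplus_comm; exact: (esym (S_INR m)).
Qed.

Lemma decT (P : Prop) : dec P = true -> P.
Proof. by move/(@decRP P). Qed.
Lemma decF (P : Prop) : dec P = false -> ~ P.
Proof. by move=> h hp; have := introT (@decRP P) hp; rewrite h. Qed.

Section Gen.
Variables (l : nat) (T : finType) (val : T + T -> tl l -> R) (Cls : tl l -> Prop) (ONE : tl l).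
Hypotheses (hONE : Cls ONE) (vONE : forall s, val s ONE = R1)
  (cMul : forall a b, Cls a -> Cls b -> Cls (TMul a b))
  (vMul : forall s a b, val s (TMul a b) = Rmult (val s a) (val s b))
  (cAdd : forall a b, Cls a -> Cls b -> Cls (TAdd a b))
  (vAdd : forall s a b, val s (TAdd a b) = Rplus (val s a) (val s b))
  (cScal : forall c a, Cls a -> Cls (TScal c a))
  (vScal : forall s c a, val s (TScal c a) = Rmult c (val s a)).

Definition eqF (x y : T + T) := forall e, Cls e -> val x e = val y e.

Lemma eqF_sym x y : eqF x y -> eqF y x.
Proof. by move=> h e c; rewrite h. Qed.
Lemma eqF_trans x y z : eqF x y -> eqF y z -> eqF x z.
Proof. by move=> h1 h2 e c; rewrite h1 ?h2. Qed.

Definition witness (y x0 : T + T) : tl l :=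
  epsilon (inhabits ONE) (fun e => Cls e /\ val y e <> val x0 e).

Lemma witnessP y x0 : ~ eqF y x0 -> Cls (witness y x0) /\ val y (witness y x0) <> val x0 (witness y x0).
Proof.
move=> h; apply: (epsilon_spec (inhabits ONE) (fun e => Cls e /\ val y e <> val x0 e)).
apply: NNPP => hn; apply: h => e c; apply: NNPP => hne; apply: hn; by exists e.
Qed.

Definition factor (x0 y : T + T) : tl l :=
  if dec (eqF y x0) then ONE else
  let d := witness y x0 in
  TScal (/ (val x0 d - val y d)) (TAdd d (TScal (- val y d) ONE)).

Lemma factor_cls x0 y : Cls (factor x0 y).
Proof.
rewrite /factor; case: ifP => [/decT h|/decF h] //.
have [c _] := witnessP h; apply: cScal; apply: cAdd => //; exact: cScal.
Qed.

Lemma factor_one x0 y z : eqF z x0 -> val z (factor x0 y) = R1.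
Proof.
move=> hz; rewrite /factor; case: ifP => [/decT h|/decF h]; first exact: vONE.
have [c hne] := witnessP h.
rewrite vScal vAdd vScal vONE (hz _ c).
rewrite Rmult_1_r Rmult_comm; apply: Rinv_r.
by move=> /Rminus_diag_uniq /esym.
Qed.

Lemma factor_zero x0 z : ~ eqF z x0 -> val z (factor x0 z) = R0.
Proof.
move=> hz; rewrite /factor; case: ifP => [/decT h|/decF h]; first by [].
rewrite vScal vAdd vScal vONE Rmult_1_r.
by rewrite Rplus_opp_r Rmult_0_r.
Qed.

Definition ind (x0 : T + T) : tl l := foldr (fun y acc => TMul (factor x0 y) acc) ONE (enum {: T + T}).

Lemma ind_cls x0 : Cls (ind x0).
Proof.
rewrite /ind; elim: (enum _) => //= y s IH; apply: cMul => //; exact: factor_cls.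
Qed.

Lemma ind_val x0 z : val z (ind x0) = if dec (eqF z x0) then R1 else R0.
Proof.
rewrite /ind; case: ifP => [/decT h|/decF h].
- elim: (enum _) => //= y s IH; by rewrite vMul IH factor_one // Rmult_1_r.
- have : z \in enum {: T + T} by rewrite mem_enum.
  elim: (enum _) => //= y s IH; rewrite in_cons => /orP [/eqP <-|hs].
  + by rewrite vMul factor_zero // Rmult_0_l.
  + by rewrite vMul IH // Rmult_0_r.
Qed.

Hypothesis hsum : forall e, Cls e ->
  \big[Rplus/R0]_(a : T) val (inl a) e = \big[Rplus/R0]_(a : T) val (inr a) e.

Lemma count_eq x0 :
  #|[pred a | dec (eqF (inl a) x0)]| = #|[pred a | dec (eqF (inr a) x0)]|.
Proof.
have := hsum (ind_cls x0).
under eq_bigr do rewrite ind_val.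
under [in RHS]eq_bigr do rewrite ind_val.
rewrite !sum_ind; exact: INR_eq.
Qed.

Definition key (x : T + T) : {set T + T} := [set y | dec (eqF x y)].

Lemma keyE x y : (key x == key y) = dec (eqF x y).
Proof.
case: (@decRP (eqF x y)) => h.
- apply/eqP/setP => z; rewrite !inE; case: (@decRP (eqF x z)) => h1; case: (@decRP (eqF y z)) => h2 //.
  + by exfalso; apply: h2; apply: eqF_trans (eqF_sym h) h1.
  + by exfalso; apply: h1; apply: eqF_trans h h2.
- apply/negbTE/eqP => hk.
  have : y \in key y by rewrite inE; apply/decRP => e.
  by rewrite -hk inE => /decRP.
Qed.

Lemma perm_from_sums : exists s : {perm T}, forall a, eqF (inl a) (inr (s a)).
Proof.
have hc : forall K, count_mem K (map (fun a => key (inl a)) (enum T)) = count_mem K (map (fun a => key (inr a)) (enum T)).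
  move=> K; rewrite !count_map !count_FenumT.
  case: (classic (exists x0, key x0 = K)) => [[x0 <-]|hn].
  + rewrite (eq_card (B := [pred a | dec (eqF (inl a) x0)])); last by move=> a; rewrite !inE /= keyE.
    rewrite [RHS](eq_card (B := [pred a | dec (eqF (inr a) x0)])); last by move=> a; rewrite !inE /= keyE.
    exact: count_eq.
  + rewrite !eq_card0 // => a; rewrite !inE /=; apply/eqP => hk; apply: hn; by eexists; exact: hk.
have [s hs] := perm_of_keys hc.
exists s => a; have := hs a => /eqP; rewrite eq_sym keyE => /decRP //.
Qed.

End Gen.


Fixpoint nsum (l j : nat) (e : tl l) : tl l :=
  match j with 0 => e | j'.+1 => nsum j' (TSum j' e) end.

Section Nsum.
Variables (n l : nat).
Implicit Types (G : graph n l) (e : tl l).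

Lemma vars_nsum m j e : (j <= m)%N -> vars_lt m e -> vars_lt m (nsum j e).
Proof.
elim: j e => //= j IH e hj he; apply: IH; first exact: ltnW.
by split.
Qed.

Lemma sd_nsum j e : sd (nsum j e) = (sd e + j)%N.
Proof. by elim: j e => [|j IH] e /=; rewrite ?addn0 // IH /= addnS addSn. Qed.

Lemma uses_nsum Om j e : uses_only Om e -> uses_only Om (nsum j e).
Proof. by elim: j e => //= j IH e he; apply: IH. Qed.

Lemma free_nsum j e x : is_free x (nsum j e) -> is_free x e /\ (j <= x)%N.
Proof.
elim: j e => //= j IH e /IH [[hxj hx] hj]; split => //.
by rewrite ltn_neqAle hj andbT eq_sym; apply/eqP.
Qed.

Lemma eval_nsum G j e nu : eval G nu (nsum j e) =
  \big[Rplus/R0]_(f : {ffun 'I_j -> 'I_n}) eval G (ovr nu f) e.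
Proof.
elim: j e => [|j IH] e /=.
- under eq_bigr => f _.
    have -> : ovr nu f = nu by apply: functional_extensionality => x; rewrite ovr_ge.
  over.
  by rewrite big_const card_ffun card_ord card_ord expn0 /= Rplus_0_r.
- rewrite IH /=.
  rewrite (eq_bigr (fun f => \big[Rplus/R0]_(u : 'I_n) eval G (upd (ovr nu f) j u) e)) //.
  rewrite pair_big /=.
  rewrite [RHS](reindex (fun p : {ffun 'I_j -> 'I_n} * 'I_n => ext p.1 p.2)) /=.
    apply: eq_bigr => -[f u] _ /=; congr (eval G _ e).
    apply: functional_extensionality => x; rewrite /upd.
    case: (ltngtP x j) => hx.
    + have hx' : (x < j.+1)%N by apply: ltnW.
      rewrite (ovr_lt _ _ hx') ext_ovr /= (ovr_lt _ _ hx) (ovr_lt _ _ hx).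
      by [].
    + idtac.
      by rewrite !ovr_ge // ltnW.
    + subst x; rewrite (ovr_lt _ _ (ltnSn j)) ext_ovr /= ovr_ge //.
  apply: onW_bij.
  exists (fun g : {ffun 'I_j.+1 -> 'I_n} => ([ffun i => g (lift ord_max i)], g ord_max)).
  + by move=> [f u] /=; congr pair; [apply/ffunP => i; rewrite ffunE ext_lift|rewrite ext_max].
  + move=> g /=; apply/ffunP => i; rewrite /ext ffunE.
    by case: unliftP => [i' ->|->] //; rewrite ffunE.
Qed.

Lemma uses_mono (Om : fun_collection) e : uses_only (fun _ => False) e -> uses_only Om e.
Proof.
elim: e => //=.
- by move=> a IHa b IHb [*]; split; auto.
- by move=> a IHa b IHb [*]; split; auto.
- by move=> p f args IH [].
Qed.

End Nsum.


Lemma if01 (b1 b2 : bool) : (if b1 then R1 else R0) = (if b2 then R1 else R0) -> b1 = b2.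
Proof.
by case: b1; case: b2 => // h; exfalso; [apply: R1_neq_R0|apply: R1_neq_R0; apply: esym].
Qed.

Definition swap (i k x : nat) := if x == i then k else if x == k then i else x.

Lemma swapK i k : involutive (swap i k).
Proof.
move=> x; rewrite /swap.
case: (eqVneq x i) => [->|hi].
- by case: (eqVneq k i) => [->|hki]; rewrite ?eqxx.
- case: (eqVneq x k) => [->|hk]; first by rewrite eqxx.
  by rewrite (negbTE hi) (negbTE hk).
Qed.

Lemma swap_inj i k : injective (swap i k).
Proof. exact: can_inj (swapK i k). Qed.

Section Dir1.
Variables (n l k : nat) (hk : (0 < k)%N) (G H : graph n l) (d0 : 'I_n).

Definition nofun : fun_collection := fun _ => False.

Definition Cls (m t : nat) (e : tl l) := vars_lt k.+1 e /\ (sd e <= t)%N /\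
  uses_only nofun e /\ (forall x, is_free x e -> (x < m)%N).

Definition ONE : tl l := TEq 0 0.

Lemma Cls_ONE m t : (0 < m)%N -> Cls m t ONE.
Proof. by move=> hm; split => //; split => //; split => // x [->|->]. Qed.

Lemma Cls_Mul m t a b : Cls m t a -> Cls m t b -> Cls m t (TMul a b).
Proof.
move=> [va [sa [ua fa]]] [vb [sb [ub fb]]]; split => //; split; first by rewrite geq_max sa.
by split => // x /= [h|h]; auto.
Qed.
Lemma Cls_Add m t a b : Cls m t a -> Cls m t b -> Cls m t (TAdd a b).
Proof.
move=> [va [sa [ua fa]]] [vb [sb [ub fb]]]; split => //; split; first by rewrite geq_max sa.
by split => // x /= [h|h]; auto.
Qed.
Lemma Cls_Scal m t c a : Cls m t a -> Cls m t (TScal c a).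
Proof. by move=> [va [sa [ua fa]]]; split. Qed.

Definition agree t (v w : {ffun 'I_k -> 'I_n}) := forall e, Cls k t e ->
  eval G (ovr (fun _ => d0) v) e = eval H (ovr (fun _ => d0) w) e.

Lemma atp_of_eval m (x y : {ffun 'I_m -> 'I_n}) (nuG nuH : nat -> 'I_n) t (hm : (m <= k.+1)%N) :
  (forall a : 'I_m, nuG a = x a /\ nuH a = y a) ->
  (forall e, Cls m t e -> eval G nuG e = eval H nuH e) -> atp G x = atp H y.
Proof.
move=> hnu he.
have va : forall a : 'I_m, (a < k.+1)%N by move=> a; apply: leq_trans (ltn_ord a) hm.
apply: atp_of.
- move=> a b; split.
  + have := he (TEq a b); rewrite /= !(hnu a).1 !(hnu a).2 !(hnu b).1 !(hnu b).2.
    move=> h; apply: if01; apply: h; split; first by split; apply: va.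
    by split => //; split => // z [->|->].
  + have := he (TEdge a b); rewrite /= !(hnu a).1 !(hnu a).2 !(hnu b).1 !(hnu b).2.
    move=> h; apply: if01; apply: h; split; first by split; apply: va.
    by split => //; split => // z [->|->].
- move=> a s; have := he (TLab s a); rewrite /= (hnu a).1 (hnu a).2.
  by move=> h; apply: h; split; first exact: va; split => //; split => // z ->.
Qed.

Lemma ClaimA t : forall v w, agree t v w -> wl_eq t G H v w.
Proof.
elim: t => [|t IH] v w hag /=.
- apply: (@atp_of_eval k v w (ovr (fun _ => d0) v) (ovr (fun _ => d0) w) 0 (leqnSn k)).
  + by move=> a; rewrite !ovr_ord.
  + by move=> e he; apply: hag.
have hag' : agree t v w.
  move=> e [va [sa [ua fa]]]; apply: hag; split => //; split => //; exact: leqW.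
split; first exact: IH.
pose vl := fun (s : 'I_n + 'I_n) (e : tl l) => match s with
  | inl u => eval G (ovr (fun _ => u) v) e | inr u => eval H (ovr (fun _ => u) w) e end.
have hk1 : (0 < k.+1)%N by [].
have v1 : forall s, vl s ONE = R1 by case => u; rewrite /= eqxx.
have v2 : forall s a b, vl s (TMul a b) = Rmult (vl s a) (vl s b) by case.
have v3 : forall s a b, vl s (TAdd a b) = Rplus (vl s a) (vl s b) by case.
have v4 : forall s c a, vl s (TScal c a) = Rmult c (vl s a) by case.
have hsum : forall e, Cls k.+1 t e ->
    \big[Rplus/R0]_(a : 'I_n) vl (inl a) e = \big[Rplus/R0]_(a : 'I_n) vl (inr a) e.
  move=> e [va [sa [ua fa]]].
  have cs : Cls k t.+1 (TSum k e).
    split; first by split.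
    split => //; split => // x [hxk hx].
    by have := fa x hx; rewrite ltnS leq_eqVlt => /orP [/eqP //|].
  have := hag _ cs => /=.
  have E : forall (gr : graph n l) (vv : {ffun 'I_k -> 'I_n}) u,
      eval gr (upd (ovr (fun _ => d0) vv) k u) e = eval gr (ovr (fun _ => u) vv) e.
    move=> gr vv u; apply: eval_free_ext => x hx; have hxk := fa x hx.
    rewrite /upd; case: (ltngtP x k) => h.
    + by rewrite !(ovr_lt _ _ h).
    + by exfalso; move: hxk; rewrite ltnNge h.
    + by subst x; rewrite !ovr_ge.
  under eq_bigr do rewrite E.
  by under [in RHS]eq_bigr do rewrite E.
have [sig hsig] := @perm_from_sums l _ vl (Cls k.+1 t) ONE (Cls_ONE t hk1) v1
  (@Cls_Mul _ _) v2 (@Cls_Add _ _) v3 (@Cls_Scal _ _) v4 hsum.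
  exists sig => u; split.
  + apply: (atp_of_eval (t := t) (nuG := ovr (fun _ => u) v) (nuH := ovr (fun _ => sig u) w)) => //.
      by move=> a; rewrite !ext_ovr.
    by move=> e he; apply: (hsig u e he).
  + move=> i; apply: IH => e [va [sa [ua fa]]].
    pose e' := ren (swap i k) e.
    have hsw : forall x, (x < k.+1)%N -> (swap i k x < k.+1)%N.
      move=> x hx; rewrite /swap; case: eqP => // _; last case: eqP => // _.
      exact: leq_trans (ltn_ord i) (leqnSn k).
    have ce : Cls k.+1 t e'.
      have ve : vars_lt k.+1 e' by apply: vars_ren.
      split => //; split; first by rewrite sd_ren.
      split; first exact: uses_ren.
      by move=> x hx; apply: free_lt ve hx.
    have := hsig u e' ce; rewrite /= /e' !eval_ren; try exact: swap_inj.
    have Efree : forall (vv : {ffun 'I_k -> 'I_n}) uu, forall x, is_free x e ->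
        ovr (fun _ => uu) vv (swap i k x) = ovr (fun _ => d0) (subst vv i uu) x.
      move=> vv uu x hx; have hxk := fa x hx.
      rewrite (ovr_lt _ _ hxk) /subst ffunE /swap.
      case: (eqVneq x i) => [hxi|hxi].
      * have -> : Ordinal hxk = i by apply: val_inj.
        by rewrite eqxx ovr_ge.
      * have -> : (Ordinal hxk == i) = false by apply/negbTE; apply/eqP => /(congr1 val) /= /eqP; rewrite (negbTE hxi).
        have -> : (x == k) = false by apply/negbTE; rewrite neq_ltn hxk.
        by rewrite (ovr_lt _ _ hxk).
    by rewrite (eval_free_ext G (Efree v u)) (eval_free_ext H (Efree w (sig u))).
Qed.

End Dir1.


Theorem mainTheorem6 (n l : nat) (hn : (0 < n)%N) (hl : (0 < l)%N)
  (t k : nat) (hk : (1 <= k)%N) (Omega : fun_collection)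
  (hOmega : forall f, Omega f -> (0 < projT1 f)%N) :
  (forall G H : graph n l,
     rho0_TL (@TL l k.+1 (t + k) Omega) G H -> gwl_eq k t G H) /\
  (forall G H : graph n l,
     gwl_eq k t G H -> rho0_TL (@TL l k.+1 t.+1 Omega) G H).
Proof.
split.
- move=> G H hrho.
  pose d0 : 'I_n := Ordinal hn.
  pose vl := fun (s : {ffun 'I_k -> 'I_n} + {ffun 'I_k -> 'I_n}) (e : tl l) => match s with
    | inl v => eval G (ovr (fun _ => d0) v) e | inr v => eval H (ovr (fun _ => d0) v) e end.
  have v1 : forall s, vl s (ONE l) = R1 by case => u; rewrite /= eqxx.
  have v2 : forall s a b, vl s (TMul a b) = Rmult (vl s a) (vl s b) by case.
  have v3 : forall s a b, vl s (TAdd a b) = Rplus (vl s a) (vl s b) by case.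
  have v4 : forall s c a, vl s (TScal c a) = Rmult c (vl s a) by case.
  have hsum : forall e, Cls k k t e ->
      \big[Rplus/R0]_(a : {ffun 'I_k -> 'I_n}) vl (inl a) e =
      \big[Rplus/R0]_(a : {ffun 'I_k -> 'I_n}) vl (inr a) e.
    move=> e [va [sa [ua fa]]].
    have htl : TL k.+1 (t + k) Omega (nsum k e).
      split; first by apply: vars_nsum.
      split; first by rewrite sd_nsum leq_add2r.
      exact/uses_nsum/uses_mono.
    have hcl : Defs.closed (nsum k e).
      move=> x /free_nsum [hx hkx]; have := fa x hx; by rewrite ltnNge hkx.
    by have := hrho _ htl hcl (fun _ => d0); rewrite !eval_nsum.
  have [pi hpi] := @perm_from_sums l _ vl (Cls k k t) (ONE l) (Cls_ONE l k t hk) v1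
    (@Cls_Mul l k k t) v2 (@Cls_Add l k k t) v3 (@Cls_Scal l k k t) v4 hsum.
  exists pi => v; apply: (ClaimA (d0 := d0)) => e he; exact: (hpi v e he).
- move=> G H [pi hpi] e [va [sa ua]] hc nu.
  exact: (L4 (Ordinal hk) hpi va sa hc).
Qed.
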